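(* Let $n$ and $m_1,\dots,m_n$ be positive integers. Define $f(1)=m_1$ and $f(i)=m_i\left(2\sum_{j=1}^{i-1}f(j)+1\right)$ for $2\le i\le n$, let $x_i=f(i)/m_i$ for $i\in[n]$, and let $\phi(m_1,\dots,m_n)=\sum_{i=1}^n f(i)$. For each $\mathbf{a}=(a_1,\dots,a_n)\in\mathcal{A}:=[m_1]\times\cdots\times[m_n]$ let $$\mathcal{D}_{\mathbf{a}}=\left\{\alpha_1a_1x_1+\cdots+\alpha_na_nx_n \bmod v \;:\; \alpha_i\in\{-1,1\},\ i\in[n]\right\}\subseteq\mathbb{Z}_v,$$ and $\mathfrak{D}=\{\mathcal{D}_{\mathbf{a}}:\mathbf{a}\in\mathcal{A}\}$. Then for every odd positive integer $v\ge 2\phi(m_1,\dots,m_n)+1$, the pair $(\mathbb{Z}_v,\mathfrak{D})$ is a $\left(v,2^n,\prod_{i=1}^n m_i\right)$ non-half-sum disjoint packing.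
   Context: $[m]=\{1,\dots,m\}$. Arithmetic is in $\mathbb{Z}_v$, the integers modulo the odd integer $v$; the half-sum of $x,y\in\mathbb{Z}_v$ is $(x+y)\cdot 2^{-1}$. A $(v,g,b)$ non-half-sum disjoint packing is a pair $(\mathbb{Z}_v,\mathfrak{D})$ where $\mathfrak{D}$ is a family of $b$ subsets (''blocks'') of $\mathbb{Z}_v$, each of size $g$, such that (i) any two different blocks are disjoint, and (ii) for each block $\mathcal{D}\in\mathfrak{D}$ and any two different elements $x,y\in\mathcal{D}$, the half-sum $(x+y)/2$ does not belong to any block of $\mathfrak{D}$. *)

(* Defs.v *)
From HB Require Import structures.
From mathcomp Require Import all_boot all_order all_algebra.
Set Implicit Arguments. Unset Strict Implicit. Unset Printing Implicit Defensive.
Import GRing.Theory.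
Local Open Scope ring_scope.

(* Partial sums S k = f(1) + ... + f(k), with m 1-indexed (m i for i in [n]). *)
Fixpoint Ssum (m : nat -> nat) (k : nat) : nat :=
  match k with
  | 0 => 0
  | k'.+1 => (Ssum m k' + m k'.+1 * (2 * Ssum m k' + 1))%N
  end.

Definition fval (m : nat -> nat) (i : nat) : nat :=
  (m i * (2 * Ssum m i.-1 + 1))%N.

Definition xval (m : nat -> nat) (i : nat) : nat := (fval m i %/ m i)%N.

Definition phi (m : nat -> nat) (n : nat) : nat := (\sum_(1 <= i < n.+1) fval m i)%N.

(* Block D_a : index i : 'I_n stands for i+1 in [n]; a i : 'I_(m (i+1))
   stands for a_{i+1} = (a i) + 1 in [m_{i+1}]. *)
Definition block (v n : nat) (m : nat -> nat)
    (a : {dffun forall i : 'I_n, 'I_(m i.+1)}) : {set 'Z_v} :=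
  [set \sum_(i < n) (-1) ^+ (alpha i : nat) *
          (((a i).+1 * xval m i.+1)%N)%:R | alpha : {ffun 'I_n -> bool}].

Definition lemma3_family (v n : nat) (m : nat -> nat) : {set {set 'Z_v}} :=
  [set @block v n m a | a : {dffun forall i : 'I_n, 'I_(m i.+1)}].

Definition nhs_disjoint_packing (v g b : nat) (F : {set {set 'Z_v}}) : Prop :=
  [/\ #|F| = b,
      (forall B, B \in F -> #|B| = g),
      (forall B1 B2, B1 \in F -> B2 \in F -> B1 != B2 -> [disjoint B1 & B2]) &
      (forall B x y, B \in F -> x \in B -> y \in B -> x != y ->
         forall B', B' \in F -> (x + y) * (2%:R)^-1 \notin B')].

(* Main.v *)
Require Import Defs.
From mathcomp Require Import all_boot all_order all_algebra zify ring.
Import GRing.Theory Num.Theory.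
Local Open Scope ring_scope.

Definition Xn (m : nat -> nat) (k : nat) : nat := (2 * Ssum m k + 1)%N.

Lemma xvalE m k : (0 < m k.+1)%N -> xval m k.+1 = Xn m k.
Proof. by move=> h; rewrite /xval /fval /= mulKn. Qed.

Lemma phiE m n : phi m n = Ssum m n.
Proof.
rewrite /phi; elim: n => [|n IH]; first by rewrite big_geq.
by rewrite big_nat_recr //= IH /fval /=.
Qed.

Lemma split_sum n (F : 'I_n -> int) k (hk : (k < n)%N) :
  \sum_(i < n | (i < k.+1)%N) F i = F (Ordinal hk) + \sum_(i < n | (i < k)%N) F i.
Proof.
rewrite (bigD1 (Ordinal hk)) //=; congr (_ + _); apply: eq_bigl => i.
by rewrite -val_eqE /= ltnS; case: (ltngtP i k).
Qed.

Lemma bound n m (c : 'I_n -> int) (t : nat) k :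
  (forall i : 'I_n, `|c i| <= (t * m i.+1)%:Z) -> (k <= n)%N ->
  `|\sum_(i < n | (i < k)%N) c i * (Xn m i)%:Z| <= (t * Ssum m k)%:Z.
Proof.
move=> hc; elim: k => [|k IH] hk.
  by rewrite big_pred0 // => i; rewrite ltn0.
rewrite split_sum; have := IH (ltnW hk); have := hc (Ordinal hk).
rewrite /Xn /=; set R := \sum_(i < n | _) _; move: (c _) => ck h1 h2.
have: `|ck * (2 * Ssum m k + 1)%N%:Z| <= (t * (m k.+1 * (2 * Ssum m k + 1)))%N%:Z.
  rewrite normrM mulnA PoszM; apply: ler_pM => //.
nia.
Qed.

Lemma core n m (c : 'I_n -> int) :
  (forall i : 'I_n, `|c i| <= (2 * m i.+1)%:Z) ->
  \sum_(i < n) c i * (Xn m i)%:Z = 0 -> forall i, c i = 0.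
Proof.
move=> hc; rewrite (eq_bigl (fun i : 'I_n => (i < n)%N)) //.
suff H : forall k, (k <= n)%N -> \sum_(i < n | (i < k)%N) c i * (Xn m i)%:Z = 0 ->
   forall i : 'I_n, (i < k)%N -> c i = 0.
  by move=> h i; apply: (H n (leqnn n) h i (ltn_ord i)).
elim=> [|k IH] hk; first by move=> _ i; rewrite ltn0.
rewrite split_sum => hs.
have hb := @bound n m c 2 k hc (ltnW hk).
have hck : c (Ordinal hk) = 0.
  move: hs hb; rewrite /Xn /=; set R := \sum_(i < n | _) _; move: (c _) => ck.
  nia.
move: hs; rewrite hck mul0r add0r => /(IH (ltnW hk)) hR i.
rewrite ltnS leq_eqVlt; case/orP; last by move=> ik; apply: hR; rewrite ?(ltnW hk).
by move=> /eqP ik; rewrite -hck; congr c; apply: val_inj; rewrite /= ik.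
by move=> i; rewrite ltn_ord.
Qed.

Lemma Zv_nat_eq0 v (k : nat) : (1 < v)%N -> (k < v)%N -> (k%:R : 'Z_v) = 0 -> k = 0%N.
Proof.
move=> hv hk h; have := val_Zp_nat hv k; rewrite h modn_small // => <-; by [].
Qed.

Lemma Zv_int_eq0 v (k : int) : (1 < v)%N -> `|k| < v%:Z -> (k%:~R : 'Z_v) = 0 -> k = 0.
Proof.
move=> hv; case: k => [k|k] hk.
  change ((k%:R : 'Z_v) = 0 -> k%:Z = 0); move/Zv_nat_eq0 => -> //.
rewrite NegzE rmorphN /= => /eqP; rewrite oppr_eq0 => /eqP.
change (((k.+1)%:R : 'Z_v) = 0 -> Negz k = 0); move/(@Zv_nat_eq0 v k.+1 hv) => H.
suff: (k.+1 < v)%N by move/H.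
move: hk; rewrite NegzE normrN; lia.
Qed.

Section Main.
Variables (n : nat) (m : nat -> nat) (v : nat).
Hypothesis hm : forall i, (1 <= i <= n)%N -> (0 < m i)%N.
Hypothesis hv : (2 * phi m n + 1 <= v)%N.
Hypothesis v1 : (1 < v)%N.

Let A := {dffun forall i : 'I_n, 'I_(m i.+1)}.

Definition valz (al : {ffun 'I_n -> bool}) (a : A) : int :=
  \sum_(i < n) ((-1) ^+ al i * (a i).+1%:Z) * (Xn m i)%:Z.

Lemma blockE (a : A) : @block v n m a = [set (valz al a)%:~R | al : {ffun 'I_n -> bool}].
Proof.
apply: eq_imset => al; rewrite /valz rmorph_sum; apply: eq_bigr => i _.
rewrite xvalE; last by apply: hm; rewrite /= ltn_ord.
by rewrite !rmorphM /= intr_sign natrM mulrA.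
Qed.

Lemma valz_bound al (a : A) : `|valz al a| <= (phi m n)%:Z.
Proof.
rewrite phiE /valz (eq_bigl (fun i : 'I_n => (i < n)%N)); last by move=> i; rewrite ltn_ord.
have := @bound n m (fun i => (-1) ^+ al i * (a i).+1%:Z) 1 n; rewrite mul1n; apply => //.
move=> i; rewrite normrM normrX normrN1 expr1n mul1r mul1n.
have := ltn_ord (a i); lia.
Qed.

Lemma Zv_eq (p q : int) : `|p| <= (phi m n)%:Z -> `|q| <= (phi m n)%:Z ->
  (p%:~R : 'Z_v) = q%:~R -> p = q.
Proof.
move=> hp hq /eqP; rewrite -subr_eq0 -rmorphB /= => /eqP /Zv_int_eq0 h.
apply/eqP; rewrite -subr_eq0; apply/eqP/h => //.
have := ler_normB p q; lia.
Qed.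

Lemma digit_eq (b1 b2 : bool) (k1 k2 : nat) :
  (-1) ^+ b1 * k1.+1%:Z = (-1) ^+ b2 * k2.+1%:Z -> b1 = b2 /\ k1 = k2.
Proof.
by case: b1; case: b2; rewrite /= ?expr0 ?expr1 ?mul1r ?mulN1r; lia.
Qed.

Lemma valz_inj al be (a b : A) : valz al a = valz be b -> al = be /\ a = b.
Proof.
move=> /eqP; rewrite -subr_eq0 /valz -sumrB => /eqP.
under eq_bigr => i _ do rewrite -mulrBl.
move/core => h.
have H : forall i, (-1) ^+ al i * (a i).+1%:Z = (-1) ^+ be i * (b i).+1%:Z.
  move=> i; apply/eqP; rewrite -subr_eq0; apply/eqP/h => j.
  have := ltn_ord (a j); have := ltn_ord (b j).
  have := ler_normB ((-1) ^+ al j * (a j).+1%:Z) ((-1) ^+ be j * (b j).+1%:Z).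
  rewrite !normrM !normrX !normrN1 !expr1n !mul1r; lia.
split; apply/ffunP => i; have [] := digit_eq _ _ _ _ (H i) => // _; exact: val_inj.
Qed.

Hypothesis vodd : odd v.

Lemma halfsum (a b : A) s t de : s != t ->
  (((valz s a)%:~R + (valz t a)%:~R) * (2%:R)^-1 : 'Z_v) != (valz de b)%:~R.
Proof.
move=> st; apply/eqP => E.
pose u i : int := if s i == t i then (-1) ^+ s i else 0.
pose z := \sum_(i < n) (u i * (a i).+1%:Z) * (Xn m i)%:Z.
have hz : valz s a + valz t a = 2%:R * z.
  rewrite /valz -big_split mulr_sumr /=; apply: eq_bigr => i _.
  rewrite /u; case: (s i); case: (t i); rewrite /= ?expr0 ?expr1; ring.
have h2 : (2%:R : 'Z_v) \is a GRing.unit by rewrite unitZpE // coprimen2.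
have E2 : (valz de b)%:~R = (z%:~R : 'Z_v).
  by rewrite -E -rmorphD /= hz rmorphM /= rmorph_nat mulrC mulKr.
have hu : forall i, `|u i * (a i).+1%:Z| <= (m i.+1)%:Z.
  move=> i; have := ltn_ord (a i); rewrite /u normrM; case: (_ == _);
    rewrite ?normrX ?normrN1 ?expr1n ?normr0; lia.
have hzb : `|z| <= (phi m n)%:Z.
  rewrite phiE /z (eq_bigl (fun i : 'I_n => (i < n)%N)); last by move=> i; rewrite ltn_ord.
  by have := @bound n m (fun i => u i * (a i).+1%:Z) 1 n; rewrite mul1n; apply => // i; rewrite mul1n.
have Ez := Zv_eq _ _ (valz_bound de b) hzb E2.
move: Ez => /eqP; rewrite -subr_eq0 /valz /z -sumrB => /eqP.
under eq_bigr => i _ do rewrite -mulrBl.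
move/core => h.
have H : forall i, (-1) ^+ de i * (b i).+1%:Z = u i * (a i).+1%:Z.
  move=> i; apply/eqP; rewrite -subr_eq0; apply/eqP/h => j.
  have := hu j; have := ltn_ord (b j).
  have := ler_normB ((-1) ^+ de j * (b j).+1%:Z) (u j * (a j).+1%:Z).
  rewrite !normrM !normrX !normrN1 !expr1n !mul1r; lia.
move/negP: st; apply; apply/eqP/ffunP => i; have := H i; rewrite /u.
by case: eqP => // _; case: (de i); rewrite /= ?expr0 ?expr1 ?mul0r; lia.
Qed.

End Main.

Lemma Ssum_pos m k : (0 < k)%N -> (0 < m 1)%N -> (0 < Ssum m k)%N.
Proof.
elim: k => [//|[|k] IH] _ h1; first by rewrite /=; lia.
exact: leq_trans (IH isT h1) (leq_addr _ _).
Qed.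

Theorem lemma3 (n : nat) (m : nat -> nat) (v : nat) :
  (0 < n)%N ->
  (forall i, (1 <= i <= n)%N -> (0 < m i)%N) ->
  odd v -> (2 * phi m n + 1 <= v)%N ->
  @nhs_disjoint_packing v (2 ^ n) (\prod_(1 <= i < n.+1) m i) (@lemma3_family v n m).
Proof.
move=> hn hm hodd hv.
have v1 : (1 < v)%N.
  have := Ssum_pos m n hn (hm 1 (andb_true_intro (conj isT hn))); rewrite -phiE; lia.
have bE := @blockE n m v hm.
have vb := @valz_bound n m v hv v1.
have ZE := @Zv_eq n m v hv v1.
have vi := @valz_inj n m v hv v1.
have hs := @halfsum n m v hv v1 hodd.
have binj : injective (@block v n m).
  move=> a1 a2 E.
  have : ((valz n m [ffun=> false] a1)%:~R : 'Z_v) \in @block v n m a1.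
    by rewrite bE; apply: imset_f.
  rewrite E bE => /imsetP [be _] /(ZE _ _ (vb _ _) (vb _ _)).
  by case/vi.
split.
- rewrite /lemma3_family card_imset // card_dep_ffun foldrE big_map big_enum /=.
  under eq_bigr => i _ do rewrite card_ord.
  by rewrite big_add1 /= big_mkord.
- move=> B /imsetP [a _ ->]; rewrite bE card_imset ?card_ffun ?card_bool ?card_ord //.
  by move=> s t /(ZE _ _ (vb _ _) (vb _ _)); case/vi.
- move=> B1 B2 /imsetP [a _ ->] /imsetP [b _ ->] ne.
  rewrite disjoint_subset; apply/subsetP => z; rewrite !bE inE.
  case/imsetP => s _ ->; apply/negP => /imsetP [t _].
  move/(ZE _ _ (vb _ _) (vb _ _)); case/vi => _ ab.
  by move: ne; rewrite ab eqxx.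
- move=> B x y /imsetP [a _ ->]; rewrite bE.
  move=> /imsetP [s _ ->] /imsetP [t _ ->] xy B' /imsetP [b _ ->].
  rewrite bE; apply/negP => /imsetP [de _ E].
  have st : s != t by apply: contraNneq xy => ->.
  by move: (hs a b s t de st); rewrite E eqxx.
Qed.
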